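(* Let $k\ge1$. Then for all graphs $G,G'$, all $\vec v\in V(G)^{k+1}$, $\vec v'\in V(G')^{k+1}$, and all $t\in\mathbb{N}$, the following are equivalent: (i) $\mathrm{OWL}^{k+1,t}(G,\vec v)=\mathrm{OWL}^{k+1,t}(G',\vec v')$; (ii) $\mathrm{atp}_{k+1}(G,\vec v)=\mathrm{atp}_{k+1}(G',\vec v')$ and $\mathrm{WL}^{k,t}(G,\vec v[/i])=\mathrm{WL}^{k,t}(G',\vec v'[/i])$ for all $i\in[k+1]$.
   Context: Graphs are finite, undirected, simple, with a fixed number $\ell$ of vertex labels $P_1(G),\dots,P_\ell(G)\subseteq V(G)$. Colours are formal objects (nested tuples/multisets) comparable across graphs. For $\vec v=(v_1,\dots,v_m)\in V(G)^m$: $\mathrm{atp}_m(G,\vec v)$ is the 0/1-vector recording, for $1\le i<j\le m$, whether $v_i=v_j$ and whether $v_iv_j\in E(G)$, and for $i\in[m],j\in[\ell]$ whether $v_i\in P_j(G)$. $\vec vw=(v_1,\dots,v_m,w)$; $\vec v[w/i]=(v_1,\dots,v_{i-1},w,v_{i+1},\dots,v_m)$; $\vec v[/i]=(v_1,\dots,v_{i-1},v_{i+1},\dots,v_m)$. $k$-WL: $\mathrm{WL}^{k,0}=\mathrm{atp}_k$, $\mathrm{WL}^{k,t+1}(G,\vec v)=\big(\mathrm{WL}^{k,t}(G,\vec v),\{\!\{(\mathrm{atp}_{k+1}(G,\vec vw),\mathrm{WL}^{k,t}(G,\vec v[w/1]),\dots,\mathrm{WL}^{k,t}(G,\vec v[w/k])):w\in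 V(G)\}\!\}\big)$ for $\vec v\in V(G)^k$. Oblivious $m$-WL: $\mathrm{OWL}^{m,0}=\mathrm{atp}_m$, $\mathrm{OWL}^{m,t+1}(G,\vec v)=\big(\mathrm{OWL}^{m,t}(G,\vec v),M_1,\dots,M_m\big)$ with $M_i=\{\!\{\mathrm{OWL}^{m,t}(G,\vec v[w/i]):w\in V(G)\}\!\}$ for $\vec v\in V(G)^m$. *)

(* Defs.v *)
From mathcomp Require Import all_boot.
Set Implicit Arguments. Unset Strict Implicit. Unset Printing Implicit Defensive.

Record graph (l : nat) := Graph {
  gV :> finType;
  gE : rel gV;
  gE_sym : symmetric gE;
  gE_irr : irreflexive gE;
  gP : 'I_l -> {set gV} }.

(* Colours: formal trees over atomic-type vectors; comparable across graphs. *)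
Definition colour := GenTree.tree (seq bool).

(* Canonical representative of a multiset of colours: sorted by pickle code. *)
Definition mset (s : seq colour) : seq colour :=
  sort (fun x y : colour => pickle x <= pickle y) s.

Section Ops.
Variables (l : nat) (G : graph l).

(* atp_m(G, v), m = size v : equality and adjacency bits for pairs i<j,
   then label bits v_i \in P_j. *)
Definition atp (v : seq G) : seq bool :=
  let vs := zip v (iota 0 (size v)) in
  flatten [seq [:: p.1 == q.1; @gE l G p.1 q.1]
          | p <- vs, q <- [seq q <- vs | p.2 < q.2]]
  ++ [seq x \in @gP l G j | x <- v, j <- enum 'I_l].

(* v[w/i] (0-based index i) *)
Definition repl (v : seq G) (i : nat) (w : G) : seq G := set_nth w v i w.
(* v[/i] (0-based index i) *)
Definition del (v : seq G) (i : nat) : seq G := take i v ++ drop i.+1 v.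

(* k-WL colour, with k = size v *)
Fixpoint WL (t : nat) (v : seq G) : colour :=
  match t with
  | 0 => GenTree.Leaf (atp v)
  | t'.+1 =>
    GenTree.Node 0 [:: WL t' v;
      GenTree.Node 1 (mset
        [seq GenTree.Node 2 (GenTree.Leaf (atp (rcons v w))
               :: [seq WL t' (repl v i w) | i <- iota 0 (size v)])
        | w <- enum G])]
  end.

(* oblivious m-WL colour, with m = size v *)
Fixpoint OWL (t : nat) (v : seq G) : colour :=
  match t with
  | 0 => GenTree.Leaf (atp v)
  | t'.+1 =>
    GenTree.Node 0 (OWL t' v ::
      [seq GenTree.Node 1 (mset [seq OWL t' (repl v i w) | w <- enum G])
      | i <- iota 0 (size v)])
  end.
End Ops.

(* Main.v *)
Require Import Defs.
From mathcomp Require Import all_boot.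
From mathcomp Require Import zify.
Set Implicit Arguments. Unset Strict Implicit. Unset Printing Implicit Defensive.


Definition sel (T : Type) (x0 : T) (X : seq T) (p : seq nat) := map (nth x0 X) p.
Definition dl (T : Type) (s : seq T) i := take i s ++ drop i.+1 s.
Definition rp (T : Type) (s : seq T) i (w : T) := set_nth w s i w.

Lemma sel_dl T (x0 : T) X p j : sel x0 X (dl p j) = dl (sel x0 X p) j.
Proof. by rewrite /sel /dl map_cat map_take map_drop. Qed.

Lemma sel_rp T (x0 : T) X p j d :
  sel x0 X (rp p j d) = rp (sel x0 X p) j (nth x0 X d).
Proof.
rewrite /sel /rp; elim: p j => [|a p IH] [|j] //=.
  by elim: j => [|j IHj] //=; rewrite IHj.
by rewrite IH.
Qed.

Lemma selX T (v : seq T) w : sel w (rcons v w) (iota 0 (size v)) = v.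
Proof.
rewrite /sel -{3}(mkseq_nth w v) /mkseq; apply/eq_in_map => a.
by rewrite mem_iota /= => Ha; rewrite nth_rcons Ha.
Qed.

Lemma nthX T (v : seq T) w : nth w (rcons v w) (size v) = w.
Proof. by rewrite nth_rcons ltnn eqxx. Qed.

Lemma nth_dl T (x0 : T) s i j : i < size s -> nth x0 (dl s i) j = nth x0 s (bump i j).
Proof.
move=> Hi; rewrite /dl nth_cat size_take Hi /bump.
case: ltnP => Hj; first by rewrite nth_take //; congr nth; lia.
by rewrite nth_drop; congr nth; lia.
Qed.

Lemma size_dl T (s : seq T) i : i < size s -> size (dl s i) = (size s).-1.
Proof. by move=> Hi; rewrite /dl size_cat size_take size_drop Hi; lia. Qed.

Lemma dl_decomp T (x0 : T) s i : i < size s ->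
  s = take i s ++ nth x0 s i :: drop i.+1 s.
Proof. by move=> Hi; rewrite -drop_nth // cat_take_drop. Qed.

Lemma mem_dl (T : eqType) (x0 : T) s i x : uniq s -> i < size s ->
  (x \in dl s i) = (x \in s) && (x != nth x0 s i).
Proof.
move=> Hu Hi; move: Hu; rewrite {1 3}(dl_decomp x0 Hi) /dl.
rewrite cat_uniq /= => /and3P[_ /norP[Hnt _] /andP[Hnd _]].
rewrite !mem_cat inE.
case: eqP => [->|_]; last by rewrite /= andbT.
by rewrite (negbTE Hnd) (negbTE Hnt).
Qed.

Lemma uniq_dl (T : eqType) (s : seq T) i : uniq s -> uniq (dl s i).
Proof.
move=> Hu; case: (ltnP i (size s)) => Hi.
  have [x0 _] : exists x0 : T, True.
    by case: s Hi {Hu} => [|x s]; [|exists x].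
  move: Hu; rewrite {1}(dl_decomp x0 Hi) /dl !cat_uniq /=.
  by case/and3P => -> /norP[_ ->] /andP[_ ->].
by rewrite /dl take_oversize // drop_oversize ?cats0 //; lia.
Qed.

Lemma rp_perm (T : eqType) (s : seq T) j y : j < size s -> perm_eq (rp s j y) (y :: dl s j).
Proof.
move=> Hj; rewrite /rp /dl set_nthE Hj.
by rewrite -cat1s -(cat1s y (take j s ++ _)) perm_catCA.
Qed.

Lemma mset_perm (s1 s2 : seq colour) : mset s1 = mset s2 <-> perm_eq s1 s2.
Proof.
rewrite /mset.
have Ht : total (fun x y : colour => pickle x <= pickle y).
  by move=> x y; exact: leq_total.
have Htr : transitive (fun x y : colour => pickle x <= pickle y).
  by move=> x y z; exact: leq_trans.
have Has : antisymmetric (fun x y : colour => pickle x <= pickle y).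
  by move=> x y /anti_leq /(pcan_inj pickleK_inv).
by split => [H|H]; apply/(perm_sortP Ht Htr Has).
Qed.

Lemma perm_transfer (A B C D : eqType) (F : A -> C) (F' : B -> C)
  (H : A -> D) (H' : B -> D) s s' :
  perm_eq (map F s) (map F' s') ->
  (forall x y, x \in s -> y \in s' -> F x = F' y -> H x = H' y) ->
  perm_eq (map H s) (map H' s').
Proof.
elim: s s' => [|x s IH] s' Hp HF.
  by move: (perm_size Hp); rewrite size_map; case: s' {Hp HF}.
have: F x \in map F' s' by rewrite -(perm_mem Hp) mem_head.
case/mapP => y Hy Hxy.
have Hps := perm_to_rem Hy.
have Hp2 : perm_eq (map F s) (map F' (rem y s')).
  rewrite -(perm_cons (F x)); apply: (perm_trans Hp).
  by rewrite Hxy -/(map F' (y :: rem y s')) perm_map.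
apply: (@perm_trans _ (H' y :: map H' (rem y s'))); last first.
  by rewrite perm_sym -/(map H' (y :: _)) perm_map.
rewrite /= (HF x y) ?mem_head // perm_cons; apply: IH => // a b Ha Hb.
by apply: HF; rewrite ?inE ?Ha ?orbT //; apply: (mem_rem Hb).
Qed.

Lemma mset_transfer (A B : eqType) (F : A -> colour) (F' : B -> colour)
  (H : A -> colour) (H' : B -> colour) s s' :
  mset (map F s) = mset (map F' s') ->
  (forall x y, x \in s -> y \in s' -> F x = F' y -> H x = H' y) ->
  mset (map H s) = mset (map H' s').
Proof. by move=> /mset_perm Hp HF; apply/mset_perm; apply: perm_transfer HF. Qed.


Section Atp.
Variable l : nat.

Lemma atpE (G : graph l) (x0 : G) (u : seq G) : atp u =
  flatten [seq [:: nth x0 u i == nth x0 u j; @gE l G (nth x0 u i) (nth x0 u j)]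
          | i <- iota 0 (size u), j <- [seq j <- iota 0 (size u) | i < j]]
  ++ [seq nth x0 u i \in @gP l G c | i <- iota 0 (size u), c <- enum 'I_l].
Proof.
rewrite /atp; congr (_ ++ _).
  have Hz : zip u (iota 0 (size u)) = map (fun i => (nth x0 u i, i)) (iota 0 (size u)).
    apply: (@eq_from_nth _ (x0, 0)); first by rewrite size_zip size_iota minnn size_map size_iota.
    move=> i; rewrite size_zip size_iota minnn => Hi.
    by rewrite nth_zip ?size_iota // (nth_map 0) ?size_iota // nth_iota.
  set g := (fun i => (nth x0 u i, i)).
  rewrite Hz allpairs_mapl /=.
  have Ht : forall i, [seq q <- map g (iota 0 (size u)) | i < q.2] =
                      map g [seq j <- iota 0 (size u) | i < j].
    by move=> i; rewrite filter_map.
  by rewrite (eq_allpairsr _ _ Ht) allpairs_mapr.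
by rewrite -{1}(mkseq_nth x0 u) /mkseq allpairs_mapl.
Qed.

Definition agree (G G' : graph l) (X : seq G) (X' : seq G') (x0 : G) (x0' : G')
  (S : pred nat) := forall a b, S a -> S b ->
  [/\ (nth x0 X a == nth x0 X b) = (nth x0' X' a == nth x0' X' b),
      @gE l G (nth x0 X a) (nth x0 X b) = @gE l G' (nth x0' X' a) (nth x0' X' b)
    & forall c, (nth x0 X a \in @gP l G c) = (nth x0' X' a \in @gP l G' c)].

Definition prs (s : seq nat) (t : nat -> seq nat) := [seq (x, y) | x <- s, y <- t x].

Lemma flatten_allpairs2 (a b : nat -> nat -> bool) (s : seq nat) (t : nat -> seq nat) :
  flatten [seq [:: a x y; b x y] | x <- s, y <- t x] =
  flatten (map (fun z => [:: a z.1 z.2; b z.1 z.2]) (prs s t)).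
Proof. by rewrite /prs; elim: s => //= x s IH; rewrite map_cat -map_comp !flatten_cat IH. Qed.

Lemma flat2_size (A : Type) (a b : A -> bool) L :
  size (flatten [seq [:: a z; b z] | z <- L]) = 2 * size L.
Proof. by elim: L => //= z L IH; rewrite IH; lia. Qed.

Lemma flat2_inj (A : eqType) (a b a' b' : A -> bool) L :
  flatten [seq [:: a z; b z] | z <- L] = flatten [seq [:: a' z; b' z] | z <- L] ->
  forall z, z \in L -> a z = a' z /\ b z = b' z.
Proof.
elim: L => //= z0 L IH [E1 E2 /IH H] z; rewrite inE => /orP[/eqP -> //|].
exact: H.
Qed.

Lemma atp_agree (G G' : graph l) (X : seq G) (X' : seq G') x0 x0' :
  size X' = size X ->
  (atp X = atp X' <-> agree X X' x0 x0' (fun a => a < size X)).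
Proof.
move=> Hs; rewrite (atpE x0 X) (atpE x0' X') Hs !flatten_allpairs2.
split.
  move/eqP; rewrite eqseq_cat; last by rewrite !flat2_size.
  case/andP => /eqP /flat2_inj H1 /eqP /eq_in_allpairs_dep H2 a b Ha Hb.
  have Hlab : forall c, (nth x0 X a \in @gP l G c) = (nth x0' X' a \in @gP l G' c).
    by move=> c; apply: H2; rewrite ?mem_iota ?mem_enum.
  have Hp : forall a b, a < size X -> b < size X -> a < b ->
    (a, b) \in prs (iota 0 (size X)) (fun x => [seq j <- iota 0 (size X) | x < j]).
    move=> a0 b0 Ha0 Hb0 Hab; apply/allpairsPdep; exists a0, b0.
    by rewrite mem_filter !mem_iota Hab /= Ha0 Hb0.
  case: (ltngtP a b) => [Hab|Hab|<-].
  - by case: (H1 _ (Hp _ _ Ha Hb Hab)) => /= -> ->.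
  - by case: (H1 _ (Hp _ _ Hb Ha Hab)) => /= E1 E2;
       rewrite eq_sym E1 eq_sym gE_sym E2 gE_sym.
  - by rewrite !eqxx !gE_irr.
move=> H; congr (flatten _ ++ _).
  apply/eq_in_map => -[x y] /allpairsPdep [x1 [y1 [Hx Hy [-> ->]]]].
  move: Hy Hx; rewrite mem_filter !mem_iota /= => /andP[_ Hy] Hx.
  by case: (H x1 y1 Hx Hy) => -> -> _.
apply/eq_in_allpairs_dep => x; rewrite mem_iota /= => Hx c _.
by case: (H x x Hx Hx) => _ _ ->.
Qed.

Lemma atp_sel (G G' : graph l) (u : seq G) (u' : seq G') x0 x0' p :
  size u' = size u -> all (fun a => a < size u) p -> atp u = atp u' ->
  atp (sel x0 u p) = atp (sel x0' u' p).
Proof.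
move=> Hs /allP Hp /(atp_agree x0 x0' Hs) H.
apply/(atp_agree x0 x0'); first by rewrite !size_map.
move=> a b; rewrite size_map => Ha Hb.
rewrite /sel !(nth_map 0) //.
by apply: H; apply: Hp; apply: mem_nth.
Qed.

Lemma atp_sub (G G' : graph l) (X : seq G) (X' : seq G') x0 x0' D Q :
  size X' = size X -> all (fun a => a < size X) D -> {subset Q <= D} ->
  atp (sel x0 X D) = atp (sel x0' X' D) -> atp (sel x0 X Q) = atp (sel x0' X' Q).
Proof.
move=> Hs HD HQ H.
have E : forall (T : Type) (y0 : T) (Y : seq T),
    sel y0 Y Q = sel y0 (sel y0 Y D) [seq index x D | x <- Q].
  move=> T y0 Y; rewrite /sel -map_comp; apply/eq_in_map => x Hx /=.
  by rewrite (nth_map 0) ?index_mem ?HQ // nth_index // HQ.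
rewrite (E _ x0 X) (E _ x0' X').
apply: atp_sel => //; first by rewrite !size_map.
apply/allP => y /mapP [x Hx ->]; rewrite size_map index_mem; exact: HQ.
Qed.

End Atp.


Section WLs.
Variable l : nat.
Variables G G' : graph l.

Lemma rp_sel (T : Type) (x0 w : T) (u : seq T) (p : seq nat) i :
  i < size p -> uniq p -> all (fun a => a < size u) p ->
  rp (sel x0 u p) i w = sel x0 (rp u (nth 0 p i) w) p.
Proof.
move=> Hi Hu /allP Ha; rewrite /rp /sel.
have Hpi : nth 0 p i < size u by apply: Ha; apply: mem_nth.
apply: (@eq_from_nth _ x0).
  by rewrite size_set_nth !size_map; apply/maxn_idPr.
move=> r; rewrite size_set_nth size_map (maxn_idPr Hi) => Hr.
have Hpr : nth 0 p r < size u by apply: Ha; apply: mem_nth.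
rewrite (set_nth_default w) ?size_set_nth ?size_map ?(maxn_idPr Hi) //.
rewrite (nth_set_nth w [seq nth x0 u i | i <- p] i w r) /= !(nth_map 0) //.
rewrite [nth x0 (set_nth _ _ _ _) _](set_nth_default w) ?size_set_nth ?(maxn_idPr Hpi) //.
rewrite nth_set_nth /= (nth_uniq 0 Hr Hi Hu).
by case: eqP => // _; apply: set_nth_default.
Qed.

Lemma WL_sel t : forall (u : seq G) (u' : seq G') x0 x0' p,
  size u' = size u -> uniq p -> all (fun a => a < size u) p ->
  WL t u = WL t u' -> WL t (sel x0 u p) = WL t (sel x0' u' p).
Proof.
elim: t => [|t IH] u u' x0 x0' p Hs Hu Ha.
  by case=> H; congr GenTree.Leaf; apply: atp_sel.
rewrite [WL t.+1 u]/= [WL t.+1 u']/=; case=> H1 H2 /=.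
congr (GenTree.Node 0 [:: _; GenTree.Node 1 _]); first exact: IH.

apply: (mset_transfer H2) => w w' _ _ [Ha2 Hm].
rewrite Hs in Hm.
have Hm2 : forall i, i < size u -> WL t (repl u i w) = WL t (repl u' i w').
  by move=> i Hi; move/eq_in_map: Hm; apply; rewrite mem_iota.
congr (GenTree.Node 2 (GenTree.Leaf _ :: _)).
  have E : forall (T : Type) (y0 y : T) (Y : seq T), size Y = size u ->
      rcons (sel y0 Y p) y = sel y0 (rcons Y y) (rcons p (size u)).
    move=> T y0 y Y HY; rewrite /sel map_rcons -HY nth_rcons ltnn eqxx.
    congr rcons; apply/eq_in_map => a /(allP Ha) Hua /=.
    by rewrite nth_rcons HY Hua.
  rewrite (E _ x0 w u erefl) (E _ x0' w' u' Hs).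
  apply: atp_sel => //; first by rewrite !size_rcons Hs.
  rewrite all_rcons size_rcons ltnSn /=; apply: sub_all Ha => a; lia.
rewrite !size_map; apply/eq_in_map => i; rewrite mem_iota /= => Hi.
have Hpi : nth 0 p i < size u by apply: (allP Ha); apply: mem_nth.
change (WL t (rp (sel x0 u p) i w) = WL t (rp (sel x0' u' p) i w')).
rewrite (rp_sel _ _ Hi Hu Ha) (rp_sel _ _ Hi Hu); last by rewrite Hs.
apply: IH => //.
- by rewrite /rp !size_set_nth Hs.
- by rewrite /rp size_set_nth (maxn_idPr Hpi).
exact: Hm2.
Qed.

Lemma WL_sub t (X : seq G) (X' : seq G') x0 x0' D Q :
  size X' = size X -> uniq D -> all (fun a => a < size X) D -> uniq Q ->
  {subset Q <= D} ->
  WL t (sel x0 X D) = WL t (sel x0' X' D) -> WL t (sel x0 X Q) = WL t (sel x0' X' Q).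
Proof.
move=> Hs HuD HD HuQ HQ H.
have E : forall (T : Type) (y0 : T) (Y : seq T),
    sel y0 Y Q = sel y0 (sel y0 Y D) [seq index x D | x <- Q].
  move=> T y0 Y; rewrite /sel -map_comp; apply/eq_in_map => x Hx /=.
  by rewrite (nth_map 0) ?index_mem ?HQ // nth_index // HQ.
rewrite (E _ x0 X) (E _ x0' X').
apply: WL_sel => //; first by rewrite !size_map.
  rewrite map_inj_in_uniq // => x y Hx Hy Hxy.
  by rewrite -(nth_index 0 (HQ _ Hx)) Hxy nth_index // HQ.
apply/allP => y /mapP [x Hx ->]; rewrite size_map index_mem; exact: HQ.
Qed.

End WLs.


Lemma bump_lt i j n : i < n -> j < n.-1 -> bump i j < n.
Proof. rewrite /bump; lia. Qed.

Lemma mem_E n i x : i < n -> (x \in dl (iota 0 n) i) = (x < n) && (x != i).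
Proof. by move=> Hi; rewrite (mem_dl n) ?iota_uniq ?size_iota // mem_iota nth_iota. Qed.

Lemma uniq_E n i : uniq (dl (iota 0 n) i).
Proof. exact/uniq_dl/iota_uniq. Qed.

Lemma mem_A n i x : i < n -> (x \in rp (iota 0 n) i n) = (x == n) || (x < n) && (x != i).
Proof.
move=> Hi; rewrite (perm_mem (rp_perm n (_ : i < size (iota 0 n)))) ?size_iota //.
by rewrite inE mem_E.
Qed.

Lemma uniq_A n i : i < n -> uniq (rp (iota 0 n) i n).
Proof.
move=> Hi; rewrite (perm_uniq (rp_perm n (_ : i < size (iota 0 n)))) ?size_iota //.
by rewrite /= mem_E // ltnn uniq_E.
Qed.

Lemma size_A n i : i < n -> size (rp (iota 0 n) i n) = n.
Proof. by move=> Hi; rewrite /rp size_set_nth size_iota; apply/maxn_idPr. Qed.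

Lemma mem_B n i x : i < n -> (x \in rcons (dl (iota 0 n) i) n) = (x == n) || (x < n) && (x != i).
Proof. by move=> Hi; rewrite mem_rcons inE mem_E. Qed.

Lemma mem_C n i j x : i < n -> j < n ->
  (x \in dl (rp (iota 0 n) i n) j) =
  ((x == n) || (x < n) && (x != i)) && (x != (if j == i then n else j)).
Proof.
move=> Hi Hj; rewrite (mem_dl n) ?uniq_A ?size_A // mem_A //.
by rewrite /rp nth_set_nth /= nth_iota // add0n.
Qed.

Lemma uniq_C n i j : i < n -> uniq (dl (rp (iota 0 n) i n) j).
Proof. by move=> Hi; apply/uniq_dl/uniq_A. Qed.

Lemma mem_D n i j x : i < n -> j < n.-1 ->
  (x \in rp (dl (iota 0 n) i) j n) =
  (x == n) || [&& x < n, x != i & x != bump i j].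
Proof.
move=> Hi Hj.
have Hs : j < size (dl (iota 0 n) i) by rewrite size_dl size_iota.
rewrite (perm_mem (rp_perm n Hs)) inE (mem_dl n) ?uniq_E // mem_E //.
rewrite nth_dl ?size_iota // nth_iota ?bump_lt // add0n.
by rewrite andbA.
Qed.

Lemma uniq_D n i j : i < n -> j < n.-1 -> uniq (rp (dl (iota 0 n) i) j n).
Proof.
move=> Hi Hj.
have Hs : j < size (dl (iota 0 n) i) by rewrite size_dl size_iota.
rewrite (perm_uniq (rp_perm n Hs)) /= uniq_dl ?uniq_E // andbT.
by rewrite (mem_dl n) ?uniq_E // mem_E // ltnn.
Qed.


Section Main.
Variable l : nat.

Lemma sel_rcons (T : Type) (x0 : T) X p d : sel x0 X (rcons p d) = rcons (sel x0 X p) (nth x0 X d).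
Proof. exact: map_rcons. Qed.

Lemma selI (T : Type) (x0 : T) v : sel x0 v (iota 0 (size v)) = v.
Proof. exact: mkseq_nth. Qed.

Section L.
Variable H : graph l.
Variables (v : seq H) (w : H).
Let X := rcons v w.
Let n := size v.

Lemma L1 i : @repl l H v i w = sel w X (rp (iota 0 n) i n).
Proof. by rewrite sel_rp selX nthX. Qed.
Lemma L2 i : @del l H v i = sel w X (dl (iota 0 n) i).
Proof. by rewrite sel_dl selX. Qed.
Lemma L3 i : rcons (@del l H v i) w = sel w X (rcons (dl (iota 0 n) i) n).
Proof. by rewrite sel_rcons sel_dl selX nthX. Qed.
Lemma L4 i j : @repl l H (@del l H v i) j w = sel w X (rp (dl (iota 0 n) i) j n).
Proof. by rewrite sel_rp sel_dl selX nthX. Qed.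
Lemma L5 i j : @del l H (@repl l H v i w) j = sel w X (dl (rp (iota 0 n) i n) j).
Proof. by rewrite sel_dl sel_rp selX nthX. Qed.
End L.

Variables G G' : graph l.

Lemma main_gen t : forall (v : seq G) (v' : seq G'), size v' = size v ->
  (OWL t v = OWL t v' <->
   atp v = atp v' /\ forall i, i < size v -> WL t (del v i) = WL t (del v' i)).
Proof.
elim: t => [|t IH] v v' Hs.
  split; last by case=> Ha _; rewrite /= Ha.
  case=> Ha; split => // i Hi; congr GenTree.Leaf.
  have [x0 _] : exists x0 : G, True by case: (v) Hi => [|x]; [|exists x].
  have [x0' _] : exists x0 : G', True by case: (v') Hs Hi => [|x] /=; [move<-|exists x].
  change (atp (dl v i) = atp (dl v' i)).
  rewrite -{1}(selI x0 v) -{1}(selI x0' v') -!sel_dl Hs.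
  apply: atp_sel => //; apply/allP => x; rewrite mem_E //; case/andP=> //.
have Hsr : forall i w w', size (@repl l G' v' i w') = size (@repl l G v i w).
  by move=> i w w'; rewrite /repl !size_set_nth Hs.
have Hsz : forall i w, i < size v -> size (@repl l G v i w) = size v.
  by move=> i w Hi; rewrite /repl size_set_nth; apply/maxn_idPr.
have HszX : forall w w', size (rcons v' w') = size (rcons v w).
  by move=> w w'; rewrite !size_rcons Hs.
have Hdl : forall i, i < size v -> size (@del l G v i) = (size v).-1.
  by move=> i Hi; exact: size_dl.
split.
  rewrite [OWL _ v]/= [OWL _ v']/= Hs; case=> /(IH _ _ Hs) [Ha Hd] Hm.
  have Hm' : forall i, i < size v -> mset [seq OWL t (repl v i w) | w <- enum G] =
                                     mset [seq OWL t (repl v' i w) | w <- enum G'].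
    move/eq_in_map: Hm => Hm i Hi.
    by move: (Hm i); rewrite mem_iota /= => /(_ Hi) [].
  split => // i Hi; rewrite [WL _ (del v i)]/= [WL _ (del v' i)]/=.
  congr (GenTree.Node 0 [:: _; GenTree.Node 1 _]); first exact: Hd.
  apply: (mset_transfer (Hm' i Hi)) => w w' _ _ Heq.
  have [Ha2 Hw2] := (IH _ _ (Hsr i w w')).1 Heq.
  rewrite !L1 Hs in Ha2.
  congr (GenTree.Node 2 (GenTree.Leaf _ :: _)).
    rewrite !L3 Hs; apply: (atp_sub _ _ _ Ha2) => //.
    - by apply/allP => x; rewrite mem_A // size_rcons; lia.
    - by move=> x; rewrite mem_B // mem_A.
  have -> : size (del v' i) = size (del v i) by rewrite /del !size_cat !size_take !size_drop Hs.
  apply/eq_in_map => j; rewrite mem_iota Hdl // => /andP[_ Hj].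
  rewrite !L4 Hs.
  have Hb : bump i j < size v by apply: bump_lt.
  move: (Hw2 (bump i j)); rewrite Hsz // => /(_ Hb); rewrite !L5 Hs => H.
  apply: (WL_sub _ _ _ _ _ H) => //.
  - exact: uniq_C.
  - by apply/allP => x; rewrite mem_C // size_rcons; lia.
  - exact: uniq_D.
  - have Hne : (bump i j == i) = false by rewrite eq_sym (negbTE (neq_bump i j)).
    move=> x; rewrite mem_D // mem_C // Hne /bump; lia.
case=> Ha Hd.
have Hd0 : forall i, i < size v -> WL t (del v i) = WL t (del v' i).
  by move=> i /Hd; rewrite [WL _ (del v i)]/= [WL _ (del v' i)]/=; case.
have Hd1 := fun i (Hi : i < size v) => f_equal (fun c => match c with
   | GenTree.Node _ [:: _; GenTree.Node _ m] => m | _ => [::] end) (Hd i Hi).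
rewrite [OWL _ v]/= [OWL _ v']/= Hs.
congr (GenTree.Node 0 (_ :: _)); first by apply/IH.
apply/eq_in_map => i; rewrite mem_iota => /andP[_ Hi] /=.
congr (GenTree.Node 1 _).
have H1 := Hd1 i Hi; rewrite /= in H1.
apply: (mset_transfer H1) => w w' _ _ [Hb Hm].
apply/(IH _ _ (Hsr i w w')); split.
  rewrite !L1 Hs; rewrite !L3 Hs in Hb; apply: (atp_sub _ _ _ Hb) => //.
  - by apply/allP => x; rewrite mem_B // size_rcons; lia.
  - by move=> x; rewrite mem_B // mem_A.
move=> j; rewrite Hsz // => Hj; rewrite !L5 Hs.
case: (eqVneq j i) => [->|Hji].
  have H2 := Hd0 i Hi; rewrite (L2 v w) (L2 v' w') Hs in H2.
  apply: (WL_sub _ _ _ _ _ H2) => //.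
  - exact: uniq_E.
  - by apply/allP => x; rewrite mem_E // size_rcons; lia.
  - exact: uniq_C.
  - by move=> x; rewrite mem_C // eqxx mem_E //; lia.
set j' := if j < i then j else j.-1.
have Hj' : j' < (size v).-1 by rewrite /j'; move: Hji; case: ifP; lia.
have Hb' : bump i j' = j by rewrite /j' /bump; move: Hji; case: ifP; lia.
have Hsd : size (del v' i) = size (del v i) by rewrite /del !size_cat !size_take !size_drop Hs.
rewrite Hsd in Hm.
move/eq_in_map: Hm => /(_ j'); rewrite mem_iota Hdl // Hj' => /(_ isT).
rewrite !L4 Hs => H2.
apply: (WL_sub _ _ _ _ _ H2) => //.
- exact: uniq_D.
- by apply/allP => x; rewrite mem_D // size_rcons; lia.
- exact: uniq_C.
- by move=> x; rewrite mem_C // mem_D // Hb' (negbTE Hji); lia.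
Qed.

End Main.


Theorem lemmaA1 (l k : nat) (hk : 1 <= k) (G G' : graph l)
    (v : (k.+1).-tuple G) (v' : (k.+1).-tuple G') (t : nat) :
  @OWL l G t v = @OWL l G' t v' <->
  (@atp l G v = @atp l G' v' /\
   forall i : 'I_k.+1, @WL l G t (@del l G v i) = @WL l G' t (@del l G' v' i)).
Proof.
have Hs : size v' = size v by rewrite !size_tuple.
rewrite (main_gen t Hs) size_tuple.
split; case=> Ha H; split => // i.
  exact: H.
by move=> Hi; exact: (H (Ordinal Hi)).
Qed.
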